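(* Let $n\ge2$, $N\ge n$ and let $(\mathcal T_0,\mathfrak c)$ be an $(N{+}1)$-colored initial triangulation in $\mathbb R^n$. Then successive bisections of simplices in $\mathcal T_0$ according to the generation-based bisection rule produce the same simplices as successive applications of Maubach's bisection to the simplices of $\mathcal T_0$ tagged by the Maubach initialization.
   Context: An $(N{+}1)$-colored triangulation is a conforming triangulation $\mathcal T_0$ of a polyhedral domain in $\mathbb R^n$ (finite set of $n$-simplices with disjoint interiors, any two meeting in the empty set or a common subsimplex) with a map $\mathfrak c$ from its vertices to $\{0,\dots,N\}$, $N\ge n$, such that vertices of each simplex have distinct colors. Generation-based rule: each vertex $v$ has an integer generation $g(v)$, level $\ell(v)$ and type $t(v)\in\{1,\dots,N\}$ with $g(v)=N(\ell(v)-1)+t(v)$; initial vertices have $g(v)=-\mathfrak c(v)$. For an arising $n$-simplex $T=[v_0,\dots,v_n]$ sorted so that $g(v_0)>\dots>g(v_n)$: if $\ell(v_n)\ne\ell(v_{n-1})$, the bisection edge is $[v_{n-1},v_n]$ and the midpoint gets generation $g(v_{n-1})+N$; otherwise with $j=\min\{k:\ell(v_k)=\ell(v_n)\}$ the bisection edge is $[v_j,v_n]$ and the midpoint gets generation $g(v_n)+2N+1-t(v_j)$. The children replace one endpoint of the bisection edge by its midpoint. Maubach's bisection: a tagged simplex $[v_0,\dots,v_n]_\gamma$, $\gamma\in\{1,\dots,n\}$, is bisected at $v'=(v_0+v_\gamma)/2$ into $[v_0,\dots,v_{\gamma-1},v',v_{\gamma+1},\dots,v_n]_{\gamma'}$ and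 $[v_1,\dots,v_\gamma,v',v_{\gamma+1},\dots,v_n]_{\gamma'}$, with $\gamma'=\gamma-1$ if $\gamma\ge2$ and $\gamma'=n$ if $\gamma=1$. Maubach initialization: order the vertices of $T\in\mathcal T_0$ as $v_0,\dots,v_n$ with $\mathfrak c(v_0)<\dots<\mathfrak c(v_n)$ and tag $T=[v_n,v_0,\dots,v_{n-1}]_n$ if $\mathfrak c(v_n)=N$, and $T=[v_0,\dots,v_n]_n$ otherwise. *)

(* Defs.v *)
From HB Require Import structures.
From mathcomp Require Import all_boot all_order all_algebra.
From mathcomp Require Import all_classical all_reals.
From mathcomp Require Import topology normedtype matrix_topology matrix_normedtype.
Set Implicit Arguments. Unset Strict Implicit. Unset Printing Implicit Defensive.
Import Order.TTheory GRing.Theory Num.Theory.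
Import numFieldTopology.Exports numFieldNormedType.Exports.
Local Open Scope classical_set_scope.
Local Open Scope ring_scope.

Section Defs.
Variables (R : realType) (n : nat).
Notation point := 'rV[R]_n.

Definition hull (s : seq point) : set point :=
  [set x | exists lam : 'I_(size s) -> R,
     (forall i, 0 <= lam i) /\ \sum_i lam i = 1 /\
     x = \sum_i lam i *: nth 0 s i].

Definition is_nsimplex (s : seq point) : Prop :=
  size s = n.+1 /\
  row_free (\matrix_(i < n) (nth 0 s i.+1 - nth 0 s 0)).

Definition colored_triangulation (N : nat) (T0 : seq (seq point))
    (c : point -> nat) : Prop :=
  (forall T, T \in T0 -> is_nsimplex T) /\
      (forall i j, (i < size T0)%N -> (j < size T0)%N -> i != j ->
         interior (hull (nth [::] T0 i)) `&` interior (hull (nth [::] T0 j))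
           = set0) /\
      (* conformity: two simplices meet in the empty set or a common
         subsimplex (the hull of a set of common vertices; the empty set of
         vertices gives the empty intersection) *)
      (forall i j, (i < size T0)%N -> (j < size T0)%N -> i != j ->
         exists S : seq point,
           {subset S <= nth [::] T0 i} /\ {subset S <= nth [::] T0 j} /\
           hull (nth [::] T0 i) `&` hull (nth [::] T0 j) = hull S) /\
      (* the covered region is a domain: its interior is connected *)
      connected (interior (\bigcup_(T in [set T | T \in T0]) hull T)) /\
      (forall T, T \in T0 -> forall v, v \in T -> (c v <= N)%N) /\
      (forall T, T \in T0 -> uniq (map c T)).

Definition midpoint (a b : point) : point := (2%:R)^-1 *: (a + b).

(* g = N (l - 1) + t with t in {1..N} *)
Definition level (N : nat) (g : int) : int := ((g - 1) %/ N)%Z + 1.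
Definition vtype (N : nat) (g : int) : int := ((g - 1) %% N)%Z + 1.

(* a simplex whose vertices carry generations *)
Definition gsimplex := seq (point * int).

Definition gen_bisect (N : nat) (s : gsimplex) : gsimplex * gsimplex :=
  (* sort so that g(v_0) > ... > g(v_n) *)
  let t := sort (fun a b : point * int => b.2 <= a.2) s in
  let m := (size t).-1 in
  let d := (0 : point, 0 : int) in
  let vn := nth d t m in
  let vn1 := nth d t m.-1 in
  let j := if level N vn1.2 != level N vn.2 then m.-1
           else find (fun v : point * int => level N v.2 == level N vn.2) t in
  let vj := nth d t j in
  let g' := if level N vn1.2 != level N vn.2 then vn1.2 + N%:Z
            else vn.2 + 2 * N%:Z + 1 - vtype N vj.2 in
  let v' := (midpoint vj.1 vn.1, g') in
  (set_nth d t j v', set_nth d t m v').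

Definition gen_children (N : nat) (s : gsimplex) : seq gsimplex :=
  let p := gen_bisect N s in [:: p.1; p.2].

Definition gen_desc (N k : nat) (s : gsimplex) : seq gsimplex :=
  iter k (fun L => flatten (map (gen_children N) L)) [:: s].

Definition gen_init (c : point -> nat) (T : seq point) : gsimplex :=
  map (fun v => (v, - (c v)%:Z)) T.

Definition tsimplex := (seq point * nat)%type.

Definition maub_children (s : tsimplex) : seq tsimplex :=
  let: (v, gam) := s in
  let v' := midpoint (nth 0 v 0) (nth 0 v gam) in
  let gam' := if (2 <= gam)%N then gam.-1 else n in
  [:: (set_nth 0 v gam v', gam');
      (take gam (behead v) ++ v' :: drop gam.+1 v, gam')].

Definition maub_desc (k : nat) (s : tsimplex) : seq tsimplex :=
  iter k (fun L => flatten (map maub_children L)) [:: s].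

Definition maub_init (N : nat) (c : point -> nat) (T : seq point) : tsimplex :=
  let u := sort (fun a b => (c a <= c b)%N) T in
  if c (last 0 u) == N then (rotr 1 u, n) else (u, n).

Definition same_simplices (A B : seq (seq point)) : bool :=
  all (fun a => has (perm_eq a) B) A && all (fun b => has (perm_eq b) A) B.

End Defs.

(* Main.v *)
Require Import Defs.
From HB Require Import structures.
From mathcomp Require Import all_boot all_order all_algebra.
From mathcomp Require Import all_classical all_reals.
From mathcomp Require Import topology normedtype matrix_topology matrix_normedtype.
From mathcomp Require Import zify.
Import Order.TTheory GRing.Theory Num.Theory.
Import numFieldTopology.Exports numFieldNormedType.Exports.
Local Open Scope ring_scope.



Definition lev_in (N : nat) (l g : int) : bool :=
  (N%:Z * (l - 1) < g) && (g <= N%:Z * l).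

Lemma lev_level N g : (0 < N)%N -> lev_in N (level N g) g.
Proof.
move=> N0; rewrite /lev_in /level.
have Nz : (N%:Z != 0) by rewrite eqz_nat -lt0n.
have := divz_eq (g - 1) N; have := modz_ge0 (g - 1) Nz.
have : ((g - 1) %% N)%Z < N%:Z by apply: ltz_pmod; rewrite ltz_nat.
set q := ((g - 1) %/ N)%Z; set r := ((g - 1) %% N)%Z => h1 h2 h3.
rewrite addrK; apply/andP; split; lia.
Qed.

Lemma level_eq N l g : (0 < N)%N -> lev_in N l g -> level N g = l.
Proof.
move=> N0 H; have := @lev_level N g N0; move: H; rewrite /lev_in.
set q := level N g => /andP[h1 h2] /andP[h3 h4].
nia.
Qed.

Lemma vtype_eq N l g : (0 < N)%N -> lev_in N l g -> vtype N g = g - N%:Z * (l - 1).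
Proof.
move=> N0 H; have := @level_eq N l g N0 H; rewrite /level /vtype => <-.
have := divz_eq (g - 1) N.
set q := ((g - 1) %/ N)%Z; set r := ((g - 1) %% N)%Z => h.
rewrite addrK; lia.
Qed.

Set Implicit Arguments. Unset Strict Implicit.


Definition gtz : rel int := fun a b => b < a.

Lemma set_nth_catS (T : Type) (d : T) (A B : seq T) x y :
  set_nth d (A ++ x :: B) (size A) y = A ++ y :: B.
Proof. by elim: A => //= a A ->. Qed.

Lemma set_nth_last2 (T : Type) (d : T) (W : seq T) a b y :
  set_nth d (W ++ [:: a; b]) (size W).+1 y = W ++ [:: a; y].
Proof. by elim: W => //= w W ->. Qed.

Lemma nth_catS (T : Type) (d : T) (A B : seq T) x :
  nth d (A ++ x :: B) (size A) = x.
Proof. by rewrite nth_cat ltnn subnn. Qed.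

Lemma pairwise_neq (T : eqType) (r : rel T) (t : seq T) a b :
  pairwise r t -> a \in t -> b \in t -> a != b -> r a b || r b a.
Proof.
elim: t => //= x t IH /andP[/allP hx ht].
rewrite !inE => /orP[/eqP->|ha] /orP[/eqP->|hb] //; first by rewrite eqxx.
- by rewrite hx.
- by rewrite hx // orbT.
- exact: IH.
Qed.

Lemma pairwise_shift (A : seq int) d :
  pairwise gtz (map (fun g => g + d) A) = pairwise gtz A.
Proof.
rewrite pairwise_map; apply: eq_pairwise => a b /=; rewrite /gtz ltrD2r //.
Qed.

Lemma pairwise_shift_last (A G : seq int) c d :
  0 < d -> pairwise gtz (A ++ c :: G) ->
  pairwise gtz (map (fun g => g + d) (rcons A c) ++ c :: G).
Proof.
move=> d0; rewrite !pairwise_cat => /and3P[hAr hA hcG].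
have hcG' := hcG; move: hcG' => /= /andP[/allP hc hG].
apply/and3P; split => //.
- apply/allrelP => u w /mapP[v hv ->]; rewrite mem_rcons inE in hv.
  case/orP: hv => [/eqP->|hv] hw.
  + rewrite inE in hw; case/orP: hw => [/eqP->|hw]; rewrite /gtz.
    * by rewrite ltrDl.
    * have := hc _ hw; rewrite /gtz => h; apply: (lt_trans h); by rewrite ltrDl.
  + have := (allrelP hAr) v w hv hw; rewrite /gtz => h.
    by apply: (lt_trans h); rewrite ltrDl.
- rewrite pairwise_shift pairwise_rcons hA andbT.
  apply/allP => v hv; exact: (allrelP hAr) v c hv (mem_head _ _).
Qed.

Lemma allrel_sep (A B : seq int) c :
  (forall u, u \in A -> c < u) -> (forall w, w \in B -> w <= c) ->
  allrel gtz A B.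
Proof.
move=> hA hB; apply/allrelP => u w hu hw; rewrite /gtz.
exact: le_lt_trans (hB _ hw) (hA _ hu).
Qed.

Lemma sort_eq (R : realType) n (s t : seq ('rV[R]_n * int)) :
  perm_eq s t -> pairwise gtz (map snd t) ->
  sort (fun a b : 'rV[R]_n * int => b.2 <= a.2) s = t.
Proof.
move=> pst hpw.
have hpw' : pairwise (fun a b : 'rV[R]_n * int => b.2 < a.2) t.
  by move: hpw; rewrite pairwise_map.
have <- : sort (fun a b : 'rV[R]_n * int => b.2 <= a.2) t = sort (fun a b : 'rV[R]_n * int => b.2 <= a.2) s.
  apply/perm_sort_inP; last by rewrite perm_sym.
  - by move=> a b _ _; exact: le_total.
  - by move=> a b c _ _ _ h1 h2; exact: le_trans h2 h1.
  - move=> a b ha hb /andP[h1 h2]; apply/eqP; apply/negPn/negP => hab.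
    have := pairwise_neq hpw' ha hb hab => /orP[] h.
    + by move: h2; rewrite leNgt h.
    + by move: h1; rewrite leNgt h.
apply: sorted_sort; first by move=> a b c h1 h2; exact: le_trans h2 h1.
apply: pairwise_sorted; apply: sub_pairwise hpw'; move=> a b /ltW //.
Qed.


Lemma gb_form (R : realType) n N (s : gsimplex R n) W y z :
  sort (fun a b : 'rV[R]_n * int => b.2 <= a.2) s = W ++ [:: y; z] ->
  let t := W ++ [:: y; z] in
  let c := level N y.2 != level N z.2 in
  let j := if c then size W else find (fun v : 'rV[R]_n * int => level N v.2 == level N z.2) t in
  let vj := nth (0, 0) t j in
  let g' := if c then y.2 + N%:Z else z.2 + 2 * N%:Z + 1 - vtype N vj.2 in
  gen_bisect N s = (set_nth (0, 0) t j (midpoint vj.1 z.1, g'),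
                    set_nth (0, 0) t (size W).+1 (midpoint vj.1 z.1, g')).
Proof.
move=> hs t c j vj g'; rewrite /gen_bisect hs -/t.
have -> : (size t).-1 = (size W).+1 by rewrite /t size_cat /= addn2.
have -> : nth (0, 0) t (size W).+1 = z.
  by rewrite /t nth_cat ltnNge leqnSn /= subSn // subnn.
have -> : nth (0, 0) t (size W).+1.-1 = y by rewrite /= /t nth_catS.
by [].
Qed.


Definition shiftg (N : nat) (l g0 : int) : int :=
  if g0 <= N%:Z * (l - 1) then N%:Z else 2 * N%:Z + 1 - (g0 - N%:Z * (l - 1)).

Definition InvM (R : realType) n (N : nat) (l : int) (x0 : 'rV[R]_n * int)
    (X1 X2 : seq ('rV[R]_n * int)) : bool :=
  [&& X1 != [::], all (fun x => lev_in N l x.2) X1,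
      all (fun x => lev_in N (l + 1) x.2) X2,
      pairwise gtz (map (fun x => x.2 + shiftg N l x0.2) X1 ++ map snd X2) &
      (x0.2 <= N%:Z * (l - 1)) || ((x0.2 <= N%:Z * l) && (head 0 (map snd X1) < x0.2))].

Definition Rel (R : realType) n (N : nat) (s : gsimplex R n) (y : tsimplex R n) : Prop :=
  exists x0 X1 X2 l, [/\ y = (map fst (x0 :: X1 ++ X2), size X1),
     (size X1 + size X2)%N = n, perm_eq s (x0 :: X1 ++ X2) & InvM N l x0 X1 X2].

Lemma head_max (L : seq int) u : pairwise gtz L -> u \in L -> u <= head 0 L.
Proof.
case: L => //= h L /andP[/allP hh _]; rewrite inE => /orP[/eqP->//|hu].
exact: ltW (hh _ hu).
Qed.

Lemma pairwise_shift2 (R : realType) n (X : seq ('rV[R]_n * int)) d :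
  pairwise gtz (map (fun x => x.2 + d) X) = pairwise gtz (map snd X).
Proof. by rewrite !pairwise_map; apply: eq_pairwise => a b; rewrite /= /gtz ltrD2r. Qed.

Lemma inv_X1 (R : realType) n N l (x0 : 'rV[R]_n * int) X1 X2 :
  InvM N l x0 X1 X2 -> pairwise gtz (map snd X1).
Proof.
case/and5P=> _ _ _ + _; rewrite pairwise_cat => /and3P[_ + _].
by rewrite pairwise_shift2.
Qed.

Lemma inv_caseB (R : realType) n N l (x0 : 'rV[R]_n * int) X1 X2 :
  InvM N l x0 X1 X2 -> ~~ (x0.2 <= N%:Z * (l - 1)) ->
  lev_in N l x0.2 /\ (forall x, x \in X1 -> x.2 < x0.2).
Proof.
move=> hI hB; have hp := inv_X1 hI; case/and5P: hI => _ _ _ _.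
rewrite (negbTE hB) /= => /andP[h1 h2]; split.
  by rewrite /lev_in h1 andbT ltNge.
move=> x hx; apply: le_lt_trans h2; apply: head_max hp _.
by apply/mapP; exists x.
Qed.

Lemma lev_new (R : realType) n N l (x0 : 'rV[R]_n * int) X1' xg X2 :
  InvM N l x0 (rcons X1' xg) X2 -> lev_in N (l + 1) (xg.2 + shiftg N l x0.2).
Proof.
move=> hI; have hx : xg \in rcons X1' xg by rewrite mem_rcons mem_head.
have := hI; case/and5P=> _ /allP hl _ _ _.
have := hl _ hx; rewrite /lev_in /shiftg => /andP[a1 a2].
case: ifP => hc; first by apply/andP; split; nia.
have [/andP[b1 b2] /(_ _ hx) hlt] := inv_caseB hI (negbT hc).
move: a1 a2 b1 b2 hlt; set u := xg.2; set v := x0.2 => a1 a2 b1 b2 hlt. apply/andP; split. all: lia.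
Qed.

Lemma maub_form (R : realType) n (x0 : 'rV[R]_n * int) X1' xg X2 :
  maub_children (map fst (x0 :: rcons X1' xg ++ X2), size (rcons X1' xg)) =
  [:: (map fst (x0 :: X1') ++ midpoint x0.1 xg.1 :: map fst X2,
       if (2 <= (size X1').+1)%N then size X1' else n);
      (map fst (rcons X1' xg) ++ midpoint x0.1 xg.1 :: map fst X2,
       if (2 <= (size X1').+1)%N then size X1' else n)].
Proof.
have hL : map fst (rcons X1' xg ++ X2) = map fst X1' ++ xg.1 :: map fst X2.
  by rewrite cat_rcons map_cat.
rewrite /maub_children size_rcons /= hL.
have -> : nth 0 (map fst X1' ++ xg.1 :: map fst X2) (size X1') = xg.1.
  by rewrite -(size_map fst X1') nth_catS.
have -> : set_nth 0 (map fst X1' ++ xg.1 :: map fst X2) (size X1') (midpoint x0.1 xg.1)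
   = map fst X1' ++ midpoint x0.1 xg.1 :: map fst X2.
  by rewrite -(size_map fst X1') set_nth_catS.
rewrite -hL.
have -> : take (size X1').+1 (map fst (rcons X1' xg ++ X2)) = map fst (rcons X1' xg).
  by rewrite map_cat take_size_cat // size_map size_rcons.
have -> : drop (size X1').+1 (map fst (rcons X1' xg ++ X2)) = map fst X2.
  by rewrite map_cat drop_size_cat // size_map size_rcons.
by [].
Qed.

Lemma rel_child1 (R : realType) n N l (x0 : 'rV[R]_n * int) X1' xg X2
    (s' : gsimplex R n) p :
  InvM N l x0 (rcons X1' xg) X2 -> (size (rcons X1' xg) + size X2)%N = n ->
  perm_eq s' (x0 :: X1' ++ (p, xg.2 + shiftg N l x0.2) :: X2) ->
  Rel N s' (map fst (x0 :: X1') ++ p :: map fst X2,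
            if (2 <= (size X1').+1)%N then size X1' else n).
Proof.
move=> hI hsz hp.
have hlev := lev_new hI.
case/and5P: (hI) => hne hl1 hl2 hpw hx0.
case: X1' hI hne hl1 hpw hx0 hsz hp => [|x1 M] hI hne hl1 hpw hx0 hsz hp.
- exists x0, ((p, xg.2 + shiftg N l x0.2) :: X2), [::], (l + 1); split.
  + have hn : (size X2).+1 = n := hsz.
    by rewrite cats0 /= hn.
  + by rewrite /= addn0.
  + by rewrite cats0.
  + have hpw' : pairwise gtz (map (fun x : 'rV[R]_n * int => x.2 + shiftg N (l + 1) x0.2) ((p, xg.2 + shiftg N l x0.2) :: X2)
        ++ map snd ([::] : seq ('rV[R]_n * int))) by rewrite cats0 pairwise_shift2.
    rewrite /InvM hpw' /= hlev hl2 /=.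
    apply/orP; left; move: hx0; set v := x0.2 => /orP[h|/andP[h _]]; lia.
- exists x0, (x1 :: M), ((p, xg.2 + shiftg N l x0.2) :: X2), l; split.
  + by rewrite /= map_cat.
  + by move: hsz; rewrite size_rcons /=; lia.
  + by [].
  + move: hl1; rewrite all_rcons => /andP[_ hl1'].
    move: hpw; rewrite map_rcons cat_rcons => hpw'.
    rewrite /InvM hl1' hpw' /= hlev hl2 /=.
    exact: hx0.
Qed.

Lemma head_in (L : seq int) : L != [::] -> head 0 L \in L.
Proof. by case: L => //= a L _; rewrite mem_head. Qed.

Lemma rel_child2 (R : realType) n N l (x0 : 'rV[R]_n * int) X1' xg X2
    (s' : gsimplex R n) p :
  InvM N l x0 (rcons X1' xg) X2 -> (size (rcons X1' xg) + size X2)%N = n ->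
  perm_eq s' (rcons X1' xg ++ (p, xg.2 + shiftg N l x0.2) :: X2) ->
  Rel N s' (map fst (rcons X1' xg) ++ p :: map fst X2,
            if (2 <= (size X1').+1)%N then size X1' else n).
Proof.
move=> hI hsz hp.
have hlev := lev_new hI.
have hX1 := inv_X1 hI.
case/and5P: (hI) => hne hl1 hl2 hpw hx0.
case: X1' hI hne hl1 hpw hx0 hsz hp hX1 => [|x1 M] hI hne hl1 hpw hx0 hsz hp hX1.
- exists xg, ((p, xg.2 + shiftg N l x0.2) :: X2), [::], (l + 1); split.
  + have hn : (size X2).+1 = n := hsz.
    by rewrite cats0 /= hn.
  + by rewrite /= addn0.
  + by rewrite cats0.
  + have hpw' : pairwise gtz (map (fun x : 'rV[R]_n * int => x.2 + shiftg N (l + 1) xg.2) ((p, xg.2 + shiftg N l x0.2) :: X2)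
        ++ map snd ([::] : seq ('rV[R]_n * int))) by rewrite cats0 pairwise_shift2.
    rewrite /InvM hpw' /= hlev hl2 /=.
    move: hl1; rewrite /= andbT /lev_in; set v := xg.2 => /andP[h1 h2].
    apply/orP; left; lia.
- exists x1, (rcons M xg), ((p, xg.2 + shiftg N l x0.2) :: X2), l; split.
  + by rewrite /= map_cat size_rcons.
  + by move: hsz; rewrite /= !size_rcons; lia.
  + by [].
  + move: hl1; rewrite /= => /andP[hx1 hl1].
    have hx1B : (x1.2 <= N%:Z * (l - 1)) = false.
      by move: hx1; rewrite /lev_in; set v := x1.2 => /andP[h1 h2]; apply/negbTE; rewrite -ltNge.
    have hne' : rcons M xg != [::] by case: M {hI hne hpw hx0 hsz hp hX1 hl1}.
    rewrite /InvM /= hne' hl1 hlev hl2 hx1B /=.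
    apply/andP; split; last first.
      apply/andP; split.
        by move: hx1; rewrite /lev_in => /andP[].
      move: hX1; rewrite /= => /andP[/allP h _]; apply: h; apply: head_in.
      by rewrite map_rcons; case: (map snd M).
    set sh := shiftg N l x0.2; set sh1 := shiftg N l x1.2.
    have hlt : sh < sh1.
      rewrite /sh /sh1 /shiftg hx1B; move: hx1; rewrite /lev_in => /andP[a1 a2].
      case: ifP => hc.
        by move: a1 a2; set v := x1.2 => a1 a2; lia.
      have [_ hb] := inv_caseB hI (negbT hc).
      have := hb x1 (mem_head _ _); move: a1 a2.
      set v := x1.2; set w := x0.2 => a1 a2 h3; lia.
    have hd : 0 < sh1 - sh by rewrite subr_gt0.
    move: hpw; rewrite /= map_rcons cat_rcons /= => /andP[_ hpw].
    have := pairwise_shift_last hd hpw.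
    have E : [seq g + (sh1 - sh) | g <- rcons [seq x.2 + sh | x <- M] (xg.2 + sh)]
           = [seq x.2 + sh1 | x <- rcons M xg].
      rewrite -map_rcons -map_comp; apply: eq_map => x /=.
      by rewrite [sh1 - sh]addrC addrA addrK.
    by rewrite E.
Qed.


Ltac permtac := apply/permP => ?; rewrite -?cats1 ?count_cat /= ?count_cat /=; lia.


Lemma pAs (T : eqType) (x0 xg : T) (X1' X2 : seq T) : perm_eq (x0 :: rcons X1' xg ++ X2) ((X2 ++ X1') ++ [:: xg; x0]).
Proof. permtac. Qed.
Lemma pA1 (T : eqType) (x0 v : T) (X1' X2 : seq T) : perm_eq ((X2 ++ X1') ++ [:: v; x0]) (x0 :: X1' ++ v :: X2).
Proof. permtac. Qed.
Lemma pA2 (T : eqType) (xg v : T) (X1' X2 : seq T) : perm_eq ((X2 ++ X1') ++ [:: xg; v]) (rcons X1' xg ++ v :: X2).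
Proof. permtac. Qed.
Lemma pBs (T : eqType) (x0 xg : T) (X1' X2 : seq T) : perm_eq (x0 :: rcons X1' xg ++ X2) (X2 ++ x0 :: rcons X1' xg).
Proof. permtac. Qed.
Lemma pB2 (T : eqType) (xg v : T) (X1' X2 : seq T) : perm_eq (X2 ++ v :: rcons X1' xg) (rcons X1' xg ++ v :: X2).
Proof. permtac. Qed.
Lemma pB1 (T : eqType) (x0 v : T) (X1' X2 : seq T) : perm_eq (X2 ++ x0 :: rcons X1' v) (x0 :: X1' ++ v :: X2).
Proof. permtac. Qed.

Lemma midpointC (R : realType) n (a b : 'rV[R]_n) : midpoint a b = midpoint b a.
Proof. by rewrite /midpoint addrC. Qed.

Lemma step (R : realType) n N (s : gsimplex R n) (y : tsimplex R n) :
  (0 < N)%N -> Rel N s y ->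
  exists a b c d, [/\ gen_children N s = [:: a; b], maub_children y = [:: c; d] &
     (Rel N a c /\ Rel N b d) \/ (Rel N a d /\ Rel N b c)].
Proof.
move=> N0 [x0 [X1 [X2 [l [-> hsz hp hI]]]]].
have hne : X1 != [::] by case/and5P: hI.
case/lastP: X1 hsz hp hI hne => [//|X1' xg] hsz hp hI _.
rewrite maub_form.
have hlev := lev_new hI.
have hX1 := inv_X1 hI.
have := hI; case/and5P=> _ hl1 hl2 hpw hx0.
have hxg : lev_in N l xg.2.
  by move: hl1; rewrite all_rcons => /andP[].
have hlxg : level N xg.2 = l := level_eq _ _ _ N0 hxg.
have hX1l : forall x, x \in rcons X1' xg -> lev_in N l x.2 by apply/allP.
have hX2l : forall x, x \in X2 -> lev_in N (l + 1) x.2 by apply/allP.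
case: (boolP (x0.2 <= N%:Z * (l - 1))) => hc.
-
  have hsh : shiftg N l x0.2 = N%:Z by rewrite /shiftg hc.
  set W := X2 ++ X1'.
  have hsort : sort (fun a b : 'rV[R]_n * int => b.2 <= a.2) s = W ++ [:: xg; x0].
    apply: sort_eq; first exact: perm_trans hp (pAs _ _ _ _).
    have -> : map snd (W ++ [:: xg; x0]) = map snd X2 ++ (map snd (rcons X1' xg) ++ [:: x0.2]).
      by rewrite /W map_rcons -cats1 !map_cat -!catA.
    rewrite pairwise_cat; apply/and3P; split.
    + apply: (@allrel_sep _ _ (N%:Z * l)).
        move=> u /mapP[x hx ->]; have := hX2l x hx; rewrite /lev_in.
        by set v := x.2 => /andP[h1 h2]; lia.
      move=> w; rewrite mem_cat => /orP[/mapP[x hx ->]|].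
        by have := hX1l x hx; rewrite /lev_in; set v := x.2 => /andP[h1 h2].
      rewrite inE => /eqP->; move: hc; set v := x0.2 => h; lia.
    + by move: hpw; rewrite pairwise_cat => /and3P[].
    + rewrite pairwise_cat hX1 /= andbT.
      apply: (@allrel_sep _ _ (N%:Z * (l - 1))).
        move=> u /mapP[x hx ->]; have := hX1l x hx; rewrite /lev_in.
        by set v := x.2 => /andP[h1 h2].
      by move=> w; rewrite inE => /eqP->.
  have hcond : (level N xg.2 != level N x0.2) = true.
    rewrite hlxg; apply/eqP => e; have := @lev_level N x0.2 N0.
    rewrite -e /lev_in; move: hc; set v := x0.2 => h /andP[h1 h2]; lia.
  have E := gb_form N hsort; cbv zeta in E.
  rewrite hcond /= nth_catS set_nth_catS set_nth_last2 in E.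
  rewrite /gen_children E /=.
  eexists; eexists; eexists; eexists; split; [by [] | by [] | left; split].
  + apply: rel_child1 hI hsz _; rewrite hsh midpointC; exact: pA1.
  + apply: rel_child2 hI hsz _; rewrite hsh midpointC; exact: pA2.
-
  have [hx0l hx0gt] := inv_caseB hI hc.
  have hsh : shiftg N l x0.2 = 2 * N%:Z + 1 - (x0.2 - N%:Z * (l - 1)).
    by rewrite /shiftg (negbTE hc).
  set W := X2 ++ belast x0 X1'; set yl := last x0 X1'.
  have ht : forall z, W ++ [:: yl; z] = X2 ++ x0 :: rcons X1' z.
    move=> z; rewrite /W /yl -catA; congr (_ ++ _).
    by rewrite -rcons_cons [x0 :: X1']lastI -!cats1 -catA.
  have hsort : sort (fun a b : 'rV[R]_n * int => b.2 <= a.2) s = W ++ [:: yl; xg].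
    rewrite ht; apply: sort_eq; first exact: perm_trans hp (pBs _ _ _ _).
    rewrite map_cat pairwise_cat; apply/and3P; split.
    + apply: (@allrel_sep _ _ (N%:Z * l)).
        move=> u /mapP[x hx ->]; have := hX2l x hx; rewrite /lev_in.
        by set v := x.2 => /andP[h1 h2]; lia.
      move=> w /mapP[x]; rewrite inE => /orP[/eqP->|hx] ->.
        by move: hx0l; rewrite /lev_in => /andP[].
      by have := hX1l x hx; rewrite /lev_in; set v := x.2 => /andP[h1 h2].
    + by move: hpw; rewrite pairwise_cat => /and3P[].
    + rewrite /= hX1 andbT; apply/allP => u /mapP[x hx ->]; exact: hx0gt.
  have hyl : lev_in N l yl.2.
    have := mem_last x0 X1'; rewrite -/yl inE => /orP[/eqP->//|h].
    by apply: hX1l; rewrite mem_rcons inE h orbT.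
  have hcond : (level N yl.2 != level N xg.2) = false.
    by rewrite hlxg (level_eq _ _ _ N0 hyl) eqxx.
  have hlx0 : level N x0.2 = l := level_eq _ _ _ N0 hx0l.
  have hj : find (fun v : 'rV[R]_n * int => level N v.2 == level N xg.2) (W ++ [:: yl; xg])
            = size X2.
    rewrite ht find_cat.
    have -> : has (fun v : 'rV[R]_n * int => level N v.2 == level N xg.2) X2 = false.
      apply/negbTE/hasPn => x hx; rewrite hlxg (level_eq _ _ _ N0 (hX2l x hx)).
      by apply/eqP => e; move: e; lia.
    by rewrite /= hlx0 hlxg eqxx addn0.
  have hvj : nth (0, 0) (W ++ [:: yl; xg]) (size X2) = x0 by rewrite ht nth_catS.
  have E := gb_form N hsort; cbv zeta in E.
  rewrite hcond /= hj hvj (vtype_eq _ _ _ N0 hx0l) set_nth_last2 ht set_nth_catS ht in E.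
  have hg : xg.2 + 2 * N%:Z + 1 - (x0.2 - N%:Z * (l - 1)) = xg.2 + shiftg N l x0.2.
    by rewrite hsh; move: (xg.2) (x0.2) => a b; lia.
  rewrite hg in E.
  rewrite /gen_children E /=.
  eexists; eexists; eexists; eexists; split; [by [] | by [] | right; split].
  + apply: rel_child2 hI hsz _; exact: pB2.
  + apply: rel_child1 hI hsz _; exact: pB1.
Qed.


Lemma pw_negc (T : Type) (c : T -> nat) (L : seq T) :
  pairwise gtz (map (fun v => - (c v)%:Z) L) = pairwise ltn (map c L).
Proof.
rewrite !pairwise_map; apply: eq_pairwise => a b /=.
by rewrite /gtz ltrN2 ltz_nat.
Qed.

Lemma init_rel (R : realType) n N (c : 'rV[R]_n -> nat) (T : seq 'rV[R]_n) :
  (2 <= n)%N -> size T = n.+1 -> (forall v, v \in T -> (c v <= N)%N) ->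
  uniq (map c T) -> Rel N (gen_init c T) (maub_init N c T).
Proof.
move=> n2 hsT hcN hu.
set le := fun a b : 'rV[R]_n => (c a <= c b)%N.
set u := sort le T.
have hpu : perm_eq u T by rewrite /u perm_sort.
have hsu : size u = n.+1 by rewrite /u size_sort.
have hmu : forall v, v \in u -> (c v <= N)%N by move=> v; rewrite (perm_mem hpu); exact: hcN.
have hstr : pairwise ltn (map c u).
  rewrite -sorted_pairwise; last exact: ltn_trans.
  rewrite ltn_sorted_uniq_leq (perm_uniq (perm_map c hpu)) hu /=.
  rewrite sorted_map; apply: sort_sorted => a b; exact: leq_total.
set f := fun v : 'rV[R]_n => (v, - (c v)%:Z).
have hgi : perm_eq (gen_init c T) (map f u) by rewrite /gen_init perm_map // perm_sym.
have hfst : forall L, map fst (map f L) = L by move=> L; rewrite -map_comp map_id.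
have hsnd : forall L, map snd (map f L) = map (fun v => - (c v)%:Z) L by move=> L; rewrite -map_comp.
rewrite /maub_init -/le -/u; clearbody u; clear hpu.
move: hsu hmu hstr hgi; case/lastP: u => [//|w z] hsu hmu hstr hgi.
rewrite last_rcons.
have hzN : (c z <= N)%N by apply: hmu; rewrite mem_rcons mem_head.
have hwz : forall v, v \in w -> (c v < c z)%N.
  move: hstr; rewrite map_rcons pairwise_rcons => /andP[/allP h _] v hv.
  by apply: h; apply: map_f.
have hsw : size w = n by move: hsu; rewrite size_rcons => -[].
case: eqP => hz.
- rewrite rotr1_rcons.
  exists (f z), (map f w), [::], 0; split.
  + by rewrite /= cats0 hfst size_map hsw.
  + by rewrite size_map addn0.
  + by apply: perm_trans hgi _; rewrite map_rcons -cats1 /= cats0; permtac.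
  + rewrite /InvM /= cats0.
    have -> : map f w != [::] by rewrite -size_eq0 size_map hsw -lt0n; exact: leq_trans n2.
    have hsh : shiftg N 0 (- (c z)%:Z) = N%:Z by rewrite /shiftg hz; case: ifP => //; lia.
    rewrite hsh pairwise_shift2 hsnd pw_negc /=.
    apply/and3P; split.
    * apply/allP => x /mapP[v hv ->]; rewrite /lev_in /=.
      have := hwz v hv; rewrite hz; lia.
    * by move: hstr; rewrite map_rcons pairwise_rcons => /andP[].
    * by rewrite hz; apply/orP; left; lia.
- case: w hsu hmu hstr hgi hwz hsw => [|u0 w] hsu hmu hstr hgi hwz hsw.
    by rewrite -hsw in n2.
  have hzlt : (c z < N)%N by rewrite ltn_neqAle hzN andbT; apply/eqP.
  rewrite rcons_cons.
  exists (f u0), (map f (rcons w z)), [::], 0; split.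
  + have hn : (size w).+1 = n := hsw.
    by rewrite /= cats0 hfst size_map size_rcons hn.
  + have hn : (size w).+1 = n := hsw.
    by rewrite size_map addn0 size_rcons hn.
  + by apply: perm_trans hgi _; rewrite rcons_cons /= cats0.
  + have hu0 : (c u0 < c z)%N by apply: hwz; rewrite mem_head.
    have hsh : (- (c u0)%:Z <= N%:Z * (0 - 1)) = false by apply/negbTE; lia.
    rewrite /InvM /= cats0 pairwise_shift2 hsnd pw_negc /= hsh /=.
    move: hstr; rewrite map_rcons /= => /andP[h1 h2].
    rewrite -map_rcons in h1 h2.
    have [v [vs e]] : exists v vs, rcons w z = v :: vs by case: (w) => [|a b]; do 2 eexists.
    rewrite e in h1 h2 *.
    have hB : all (fun x : 'rV[R]_n * int => lev_in N 0 x.2) [seq f i | i <- v :: vs].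
      apply/allP => x /mapP[v' hv' ->]; rewrite /lev_in /=.
      have : (c v' <= c z)%N.
        move: hv'; rewrite -e mem_rcons inE => /orP[/eqP->//|hv'].
        by apply: ltnW; apply: hwz; rewrite inE hv' orbT.
      lia.
    move: h1 h2 hB => /= /andP[hv _] -> -> /=.
    apply/andP; split; lia.
Qed.


Lemma iter_rel (R : realType) n N (s0 : gsimplex R n) (y0 : tsimplex R n) :
  (0 < N)%N -> Rel N s0 y0 -> forall k,
  (forall x, x \in gen_desc N k s0 -> exists2 y, y \in maub_desc k y0 & Rel N x y) /\
  (forall y, y \in maub_desc k y0 -> exists2 x, x \in gen_desc N k s0 & Rel N x y).
Proof.
move=> N0 h0 k; rewrite /gen_desc /maub_desc; elim: k => [|k [IH1 IH2]].
  by split=> ?; rewrite inE => /eqP->; [exists y0 | exists s0]; rewrite ?inE.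
rewrite !iterS; split.
- move=> x /flatten_mapP[x' hx' hx]; have [y' hy' hr] := IH1 x' hx'.
  have [a [b [c [d [ea eb hab]]]]] := step N0 hr.
  rewrite ea !inE in hx.
  have mc : c \in flatten (map (@maub_children R n) (iter k (fun L => flatten (map (@maub_children R n) L)) [:: y0])).
    by apply/flatten_mapP; exists y'; rewrite // eb mem_head.
  have md : d \in flatten (map (@maub_children R n) (iter k (fun L => flatten (map (@maub_children R n) L)) [:: y0])).
    by apply/flatten_mapP; exists y'; rewrite // eb !inE eqxx orbT.
  case/orP: hx => /eqP->; case: hab => [[h1 h2]|[h1 h2]].
  + by exists c.
  + by exists d.
  + by exists d.
  + by exists c.
- move=> y /flatten_mapP[y' hy' hy]; have [x' hx' hr] := IH2 y' hy'.
  have [a [b [c [d [ea eb hab]]]]] := step N0 hr.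
  rewrite eb !inE in hy.
  have ma : a \in flatten (map (@gen_children R n N) (iter k (fun L => flatten (map (@gen_children R n N) L)) [:: s0])).
    by apply/flatten_mapP; exists x'; rewrite // ea mem_head.
  have mb : b \in flatten (map (@gen_children R n N) (iter k (fun L => flatten (map (@gen_children R n N) L)) [:: s0])).
    by apply/flatten_mapP; exists x'; rewrite // ea !inE eqxx orbT.
  case/orP: hy => /eqP->; case: hab => [[h1 h2]|[h1 h2]].
  + by exists a.
  + by exists b.
  + by exists b.
  + by exists a.
Qed.

Unset Implicit Arguments.

Theorem theorem4p2 (R : realType) (n N : nat) (T0 : seq (seq 'rV[R]_n))
    (c : 'rV[R]_n -> nat) :
  (2 <= n)%N -> (n <= N)%N -> colored_triangulation N T0 c ->
  forall T, T \in T0 -> forall k : nat,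
    same_simplices
      (map (map fst) (gen_desc N k (gen_init c T)))
      (map fst (maub_desc k (maub_init N c T))).
Proof.
move=> n2 nN [hs [_ [_ [_ [hc hu]]]]] T hT k.
have N0 : (0 < N)%N by apply: leq_trans nN; apply: leq_trans n2.
have [hsz _] := hs T hT.
have h0 := init_rel n2 hsz (hc T hT) (hu T hT).
have [H1 H2] := iter_rel N0 h0 k.
apply/andP; split.
- apply/allP => a /mapP[x hx ->]; have [y hy [x0 [X1 [X2 [l [ey _ hp _]]]]]] := H1 x hx.
  apply/hasP; exists y.1; first by apply: map_f.
  by rewrite ey; exact: (perm_map fst hp).
- apply/allP => b /mapP[y hy ->]; have [x hx [x0 [X1 [X2 [l [ey _ hp _]]]]]] := H2 y hy.
  apply/hasP; exists (map fst x); first by apply: map_f.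
  by rewrite ey perm_sym; exact: (perm_map fst hp).
Qed.
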